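(* Let $a_1\ge1$ be an integer, let $m_1, m_2 \ge 1$ be coprime integers, let $\bm{x}^{(1)}, \bm{x}^{(2)} \in \mathcal{L}(f)$, and put $\tau_i := \tau(\bm{x}^{(i)}; m_i)$ for $i \in \{1,2\}$. If $\rho(\bm{x}^{(2)}; m_2) = \tau_2$, then there exists $\bm{x} \in \mathcal{L}(f)$ such that $x_j \equiv x^{(i)}_j \pmod{m_i}$ for all $j\ge0$ and each $i\in\{1,2\}$, and $$\rho(\bm{x}; m_1m_2) = \frac{\tau_2}{d}\sum_{r=0}^{d-1}\rho(\bm{x}^{(1)}; m_1, r, d),$$ where $d := \gcd(\tau_1,\tau_2)$.
   Context: Let $f := X^2 - a_1X - 1$. $\mathcal{L}(f)$ is the set of integer sequences $\bm{x}=(x_n)_{n\ge0}$ with $x_{n+2} = a_1x_{n+1} + x_n$ for all $n\ge0$. For an integer $m\ge1$, $\tau(\bm{x}; m)$ is the minimal integer $t \ge 1$ with $x_{n+t}\equiv x_n \pmod m$ for all sufficiently large $n$, and $\rho(\bm{x};m) := \#\{x_n \bmod m : n\ge0\}$. For integers $m, d \ge 1$ and $r$, $\rho(\bm{x}; m, r, d) := \#\{x_n \bmod m : n \ge 0,\ n \equiv r \pmod d\}$. *)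

(* Defs.v *)
From HB Require Import structures.
From mathcomp Require Import all_boot all_order all_algebra.
From mathcomp Require Import boolp.
Set Implicit Arguments. Unset Strict Implicit. Unset Printing Implicit Defensive.
Import Order.TTheory GRing.Theory Num.Theory.

Local Open Scope ring_scope.

(* L(f) for f = X^2 - a1 X - 1: integer sequences with x_{n+2} = a1 x_{n+1} + x_n *)
Definition inL (a1 : int) (x : nat -> int) : Prop :=
  forall n : nat, x n.+2 = a1 * x n.+1 + x n.

Definition eventual_period (x : nat -> int) (m t : nat) : Prop :=
  exists N : nat, forall n : nat, (N <= n)%N -> (x (n + t)%N == x n %[mod m%:Z])%Z.

(* tau(x; m): the minimal t >= 1 that is an eventual period (0 if none exists;
   for x in L(f) and m >= 1 one always exists). *)
Definition tau (x : nat -> int) (m : nat) : nat :=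
  match pselect (exists t : nat, `[< (0 < t)%N /\ eventual_period x m t >]) with
  | left h => ex_minn h
  | right _ => 0%N
  end.

Definition rho (x : nat -> int) (m : nat) : nat :=
  #|[set k : 'I_m | `[< exists n : nat, (x n %% m%:Z)%Z = (k : nat)%:Z >]]|.

Definition rho_ap (x : nat -> int) (m r d : nat) : nat :=
  #|[set k : 'I_m | `[< exists n : nat, n = r %[mod d] /\ (x n %% m%:Z)%Z = (k : nat)%:Z >]]|.

(* Main.v *)
Require Import Defs.
From HB Require Import structures.
From mathcomp Require Import all_boot all_order all_algebra.
From mathcomp Require Import boolp ring.
Import Order.TTheory GRing.Theory Num.Theory.
Set Implicit Arguments. Unset Strict Implicit. Unset Printing Implicit Defensive.
Local Open Scope ring_scope.

Definition dv (m : nat) (a b : int) := (m%:Z %| a - b)%Z.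

Lemma dvE m a b : dv m a b <-> (a %% m%:Z = b %% m%:Z)%Z.
Proof. by rewrite /dv -eqz_mod_dvd; split => [/eqP|->]. Qed.

Lemma dv_refl m a : dv m a a.
Proof. by rewrite /dv subrr dvdz0. Qed.

Lemma dv_sym m a b : dv m a b -> dv m b a.
Proof. by rewrite /dv -opprB rpredN. Qed.

Lemma dv_trans m a b c : dv m a b -> dv m b c -> dv m a c.
Proof.
rewrite /dv => h1 h2; have := rpredD h1 h2.
by rewrite addrA subrK.
Qed.

Lemma dv_dvd n m a b : (n %| m)%N -> dv m a b -> dv n a b.
Proof. by move=> h; apply: dvdz_trans; rewrite dvdzE. Qed.

Lemma dv_modz m a : dv m (a %% m%:Z)%Z a.
Proof. by apply/dvE; rewrite modz_mod. Qed.

Lemma zmodO_lt (m : nat) (hm : (0 < m)%N) (z : int) : (`|(z %% m%:Z)%Z|%N < m)%N.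
Proof. by rewrite -ltz_nat gez0_abs ?modz_ge0 ?ltz_pmod // -lt0n. Qed.

Definition zmodO (m : nat) (hm : (0 < m)%N) (z : int) : 'I_m := Ordinal (zmodO_lt hm z).

Arguments zmodO : simpl never.

Lemma zmodOE m (hm : (0 < m)%N) z : ((zmodO hm z : nat)%:Z = (z %% m%:Z)%Z).
Proof. by rewrite /= gez0_abs // modz_ge0 // -lt0n. Qed.

Lemma zmodO_eq m (hm : (0 < m)%N) z (k : 'I_m) : (z %% m%:Z)%Z = (k : nat)%:Z -> zmodO hm z = k.
Proof. by rewrite -zmodOE => -[e]; apply: val_inj. Qed.

Section Per.
Variables (a1 : int) (x : nat -> int) (m : nat).
Hypothesis hx : inL a1 x.

Definition both t n := dv m (x (n + t)) (x n) /\ dv m (x (n.+1 + t)) (x n.+1).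

Lemma both_fwd t n : both t n -> both t n.+1.
Proof.
case=> h0 h1; split => //.
rewrite /dv addSn addSn hx hx.
have -> : a1 * x (n + t).+1 + x (n + t) - (a1 * x n.+1 + x n)
   = a1 * (x (n.+1 + t) - x n.+1) + (x (n + t) - x n).
  by rewrite addSn; ring.
by apply: rpredD => //; apply: dvdz_mull.
Qed.

Lemma both_bwd t n : both t n.+1 -> both t n.
Proof.
case=> h1 h2; split => //.
move: h2; rewrite /dv addSn addSn hx hx.
have -> : a1 * x (n + t).+1 + x (n + t) - (a1 * x n.+1 + x n)
   = a1 * (x (n.+1 + t) - x n.+1) + (x (n + t) - x n).
  by rewrite addSn; ring.
move=> h; have := rpredB h (dvdz_mull a1 h1).
by rewrite addrC addKr.
Qed.

Lemma both_all t i : both t i -> forall n, both t n.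
Proof.
move=> hi.
have up : forall k, both t (i + k).
  by elim=> [|k ih]; rewrite ?addn0 // addnS; apply: both_fwd.
have down : forall k, (k <= i)%N -> both t (i - k).
  elim=> [|k ih] hk; first by rewrite subn0.
  apply: both_bwd; rewrite subnSK //; apply: ih; exact: ltnW.
move=> n; case: (leqP i n) => hn.
  by rewrite -(subnKC hn); apply: up.
rewrite -(subKn (ltnW hn)); apply: down; exact: leq_subr.
Qed.

Lemma ev_full t : eventual_period x m t -> forall n, dv m (x (n + t)) (x n).
Proof.
case=> N hN n.
have hb : both t N.
  by split; rewrite /dv -eqz_mod_dvd; apply: hN.
by case: (@both_all t N hb n).
Qed.

Lemma period_exists : (0 < m)%N -> exists t, (0 < t)%N /\ forall n, dv m (x (n + t)) (x n).
Proof.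
move=> hm.
pose h (i : 'I_(m * m).+1) := (zmodO hm (x i), zmodO hm (x i.+1)).
have [i [j [hij ne]]] : exists i j, h i = h j /\ i <> j.
  apply: contrapT => H.
  have : injective h.
    move=> i j e; apply: contrapT => ne; apply: H; exists i, j; by split.
  by move/leq_card; rewrite card_prod !card_ord ltnn.
have key : forall i j : 'I_(m * m).+1, h i = h j -> (i < j)%N ->
    exists t, (0 < t)%N /\ forall n, dv m (x (n + t)) (x n).
  move=> {ne hij} p q e lpq; exists (q - p)%N; split; first by rewrite subn_gt0.
  have e1 := congr1 fst e; have e2 := congr1 snd e; rewrite /h /= in e1 e2.
  suff hb : both (q - p) p by move=> n; case: (@both_all (q - p) p hb n).
  split.
    rewrite subnKC; last exact: ltnW. apply/dvE; by rewrite -(zmodOE hm (x q)) -(zmodOE hm (x p)) e1.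
  rewrite addSn subnKC; last exact: ltnW. apply/dvE; by rewrite -(zmodOE hm (x q.+1)) -(zmodOE hm (x p.+1)) e2.
case: (ltngtP i j) => lij.
- exact: key hij lij.
- exact: key (esym hij) lij.
- by case: ne; apply: val_inj.
Qed.

End Per.

Lemma tau_spec a1 x m : inL a1 x -> (0 < m)%N ->
  (0 < tau x m)%N /\ forall n, dv m (x (n + tau x m)) (x n).
Proof.
move=> hx hm; rewrite /tau; case: pselect => [h|hn].
  case: ex_minnP => t /asboolP [t0 ht] _; split => //.
  exact: (ev_full hx ht).
exfalso; apply: hn; have [t [t0 ht]] := period_exists hx hm.
exists t; apply/asboolP; split => //; exists 0%N => n _.
by rewrite eqz_mod_dvd; apply: ht.
Qed.

Lemma per_mul (x : nat -> int) (m t : nat) : (forall n, dv m (x (n + t)%N) (x n)) ->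
  forall k n, dv m (x (n + k * t)%N) (x n).
Proof.
move=> ht; elim=> [|k ih] n; first by rewrite mul0n addn0 dv_refl.
rewrite mulSnr addnA; apply: dv_trans (ih n); exact: ht.
Qed.

Lemma per_mod (x : nat -> int) (m t : nat) : (forall n, dv m (x (n + t)%N) (x n)) ->
  forall n n', n = n' %[mod t] -> dv m (x n) (x n').
Proof.
move=> ht n n' e.
have h k : dv m (x k) (x (k %% t)%N).
  by rewrite {1}(divn_eq k t) addnC; apply: per_mul.
by apply: dv_trans (h n) _; rewrite e; apply: dv_sym.
Qed.

Local Close Scope ring_scope.

Lemma gcrt T1 T2 a b : (0 < T1)%N -> (0 < T2)%N -> a = b %[mod gcdn T1 T2] ->
  exists n, n = a %[mod T1] /\ n = b %[mod T2].
Proof.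
move=> h1 h2 e.
pose g := gcdn T1 T2.
have [km kn] := egcdnP T1 h2; rewrite -/(egcdn T2 T1) => Hk _; rewrite gcdnC -/g in Hk.
pose a' := (b * T1 + a)%N.
have hba : (b <= a')%N by rewrite /a' (leq_trans _ (leq_addr _ _)) // leq_pmulr.
have : g %| a' - b.
  rewrite -eqn_mod_dvd // /a' -modnDml.
  have -> : (b * T1 %% g = 0)%N by apply/eqP; rewrite -/(dvdn _ _) dvdn_mull // dvdn_gcdl.
  by rewrite add0n e.
case/dvdnP=> q hq.
exists (b + km * T2 * q)%N; split.
  have -> : (b + km * T2 * q = (b + kn * q) * T1 + a)%N.
    rewrite Hk mulnDl (mulnC g) -hq addnCA (subnKC hba) /a'; ring.
  by rewrite modnMDl.
by rewrite mulnAC addnC modnMDl.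
Qed.

Lemma sum_mod (F : nat -> nat) d n : (0 < d)%N -> (d %| n)%N ->
  (\sum_(s < n) F (s %% d) = n %/ d * \sum_(r < d) F r)%N.
Proof.
move=> hd /dvdnP [q ->]; rewrite mulnK //.
elim: q => [|q ih]; first by rewrite mul0n big_ord0.
rewrite mulSnr big_split_ord /= ih mulSnr; congr addn.
by apply: eq_bigr => i _; rewrite /= modnMDl modn_small.
Qed.

Local Open Scope ring_scope.

Lemma dv_small M z (k : nat) : (k < M)%N -> (z %% M%:Z)%Z = k%:Z -> dv M z k.
Proof. by move=> hk e; apply/dvE; rewrite e modz_nat modn_small. Qed.

Lemma nat_eq_dv m (b k : nat) z : (z %% m%:Z)%Z = b%:Z -> dv m k z -> b = (k %% m)%N.
Proof.
move=> e h; apply/eqP; rewrite -eqz_nat -e -modz_nat; apply/eqP; symmetry; exact/dvE.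
Qed.

Theorem mainTheorem15 (a1 : int) (m1 m2 : nat) (x1 x2 : nat -> int) :
  1 <= a1 -> (0 < m1)%N -> (0 < m2)%N -> coprime m1 m2 ->
  inL a1 x1 -> inL a1 x2 ->
  rho x2 m2 = tau x2 m2 ->
  let d := gcdn (tau x1 m1) (tau x2 m2) in
  exists x : nat -> int,
    [/\ inL a1 x,
        (forall j : nat, (x j == x1 j %[mod m1%:Z])%Z /\ (x j == x2 j %[mod m2%:Z])%Z) &
        rho x (m1 * m2) = (tau x2 m2 %/ d * \sum_(r < d) rho_ap x1 m1 r d)%N].
Proof.
move=> _ hm1 hm2 cop hx1 hx2 hrho d.
have [T1p P1] := tau_spec hx1 hm1.
have [T2p P2] := tau_spec hx2 hm2.
have /coprimezP [[u v] /= huv] : coprimez m1%:Z m2%:Z by rewrite coprimezE.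
pose x n := x1 n * (v * m2%:Z) + x2 n * (u * m1%:Z).
have hx : inL a1 x by move=> n; rewrite /x hx1 hx2; ring.
have c1 n : dv m1 (x n) (x1 n).
  have hv : v * m2%:Z = 1 - u * m1%:Z by rewrite -huv; ring.
  rewrite /dv /x hv.
  have -> : x1 n * (1 - u * m1%:Z) + x2 n * (u * m1%:Z) - x1 n
          = ((x2 n - x1 n) * u) * m1%:Z by ring.
  by apply: dvdz_mull; apply: dvdzz.
have c2 n : dv m2 (x n) (x2 n).
  have hu : u * m1%:Z = 1 - v * m2%:Z by rewrite -huv; ring.
  rewrite /dv /x hu.
  have -> : x1 n * (v * m2%:Z) + x2 n * (1 - v * m2%:Z) - x2 n
          = ((x1 n - x2 n) * v) * m2%:Z by ring.
  by apply: dvdz_mull; apply: dvdzz.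
exists x; split => //.
  by move=> j; rewrite !eqz_mod_dvd; split; [apply: c1 | apply: c2].
set T1 := tau x1 m1 in T1p P1 d *.
set T2 := tau x2 m2 in T2p P2 hrho d *.
have hM : (0 < m1 * m2)%N by rewrite muln_gt0 hm1.
have dT2 : (d %| T2)%N by apply: dvdn_gcdr.
have dp : (0 < d)%N by rewrite gcdn_gt0 T1p.
pose f (k : 'I_(m1 * m2)) : 'I_m2 * 'I_m1 :=
  (Ordinal (ltn_pmod k hm2), Ordinal (ltn_pmod k hm1)).
have finj : injective f.
  move=> k k' /(congr1 (fun p => (val p.1, val p.2))) /= [e2 e1].
  apply: val_inj => /=.
  have : (k == k' %[mod m1 * m2])%N by rewrite chinese_remainder // e1 e2 !eqxx.
  by rewrite !modn_small // => /eqP.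
pose g (s : 'I_T2) : 'I_m2 := zmodO hm2 (x2 s).
have ginj : {in setT &, injective g}.
  apply/imset_injP; apply/eqP; rewrite cardsT card_ord; apply: etrans hrho; rewrite /rho.
  apply: eq_card => k; rewrite [in RHS]inE.
  apply/imsetP/asboolP.
    by case=> s _ ->; exists (nat_of_ord s); rewrite zmodOE.
  case=> n hn; exists (Ordinal (ltn_pmod n T2p)) => //.
  apply: esym; apply: zmodO_eq; rewrite -hn; apply/dvE.
  by apply: (per_mod P2); rewrite /= modn_mod.
pose Q := [set p : 'I_T2 * 'I_m1 |
  `[< exists n, n = p.1 %[mod T2] /\ (x1 n %% m1%:Z)%Z = (p.2 : nat)%:Z >]].
pose G (p : 'I_T2 * 'I_m1) := (g p.1, p.2).
have Ginj : {in Q &, injective G}.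
  move=> [s b] [s' b'] _ _ e.
  have e1 := congr1 fst e; have e2 := congr1 snd e; simpl in e1, e2.
  by rewrite e2 (ginj _ _ (in_setT s) (in_setT s') e1).
pose S := [set k : 'I_(m1 * m2) | `[< exists n, (x n %% (m1 * m2)%N%:Z)%Z = (k : nat)%:Z >]].
have eSQ : f @: S = G @: Q.
  apply/setP => c; apply/imsetP/imsetP.
    case=> k; rewrite inE => /asboolP [n hn] ->.
    exists (Ordinal (ltn_pmod n T2p), zmodO hm1 (x1 n)).
      by rewrite inE; apply/asboolP; exists n; split; [rewrite /= modn_mod | rewrite zmodOE].
    have hk : dv (m1 * m2) k (x n) by apply: dv_sym; apply: dv_small.
    rewrite /f /G /g /=; congr (_, _); apply: val_inj => /=; apply: esym.
      apply: nat_eq_dv; first exact: esym (zmodOE hm2 _).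
      apply: dv_trans (dv_dvd (dvdn_mull _ (dvdnn _)) hk) _.
      apply: dv_trans (c2 n) _; by apply: (per_mod P2); rewrite /= modn_mod.
    apply: nat_eq_dv; first exact: esym (zmodOE hm1 _).
    by apply: dv_trans (dv_dvd (dvdn_mulr _ (dvdnn _)) hk) _; apply: c1.
  case=> p; rewrite inE => /asboolP [n [hn1 hn2]] ->.
  exists (zmodO hM (x n)); first by rewrite inE; apply/asboolP; exists n; rewrite zmodOE.
  have hk : dv (m1 * m2) (zmodO hM (x n)) (x n) by rewrite zmodOE; apply: dv_modz.
  rewrite /f /G /g /=; congr (_, _); apply: val_inj => /=.
    apply: nat_eq_dv; first exact: esym (zmodOE hm2 _).
    apply: dv_trans (dv_dvd (dvdn_mull _ (dvdnn _)) hk) _.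
    by apply: dv_trans (c2 n) _; apply: (per_mod P2).
  apply: nat_eq_dv; first exact: hn2.
  apply: dv_trans (dv_dvd (dvdn_mulr _ (dvdnn _)) hk) _.
  exact: c1.
have cardSQ : #|S| = #|Q|.
  by rewrite -[LHS](card_imset _ finj) eSQ (card_in_imset Ginj).
have memQ (s : 'I_T2) (b : 'I_m1) : ((s, b) \in Q) =
    (b \in [set k : 'I_m1 | `[< exists n, n = (s %% d)%N %[mod d] /\ (x1 n %% m1%:Z)%Z = (k : nat)%:Z >]]).
  rewrite !inE; apply/asboolP/asboolP => /= -[n [hn hb]].
    exists n; split => //; rewrite modn_mod -(@modn_dvdm T2 n d dT2) hn.
    exact: (@modn_dvdm T2 s d dT2).
  have [n' [e1 e2]] := gcrt (a := n) (b := s) T1p T2p (etrans hn (modn_mod _ _)).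
  exists n'; split; first exact: e2.
  rewrite -hb; apply/dvE; exact: (per_mod P1 e1).
have -> : rho x (m1 * m2) = #|S| by [].
rewrite cardSQ.
have -> : #|Q| = (\sum_(s < T2) \sum_(b < m1) (((s, b) \in Q) : nat))%N.
  rewrite pair_big /= -sum1_card big_mkcond /=; apply: eq_big => // -[s b] _ /=.
  by case: ((s, b) \in Q).
rewrite -(sum_mod (fun r => rho_ap x1 m1 r d) dp dT2).
apply: eq_bigr => s _; rewrite /rho_ap -sum1_card [RHS]big_mkcond /=.
by apply: eq_bigr => b _; rewrite memQ; case: (_ \in _).
Qed.
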